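(* Let $q$ be a prime power and let $1\le t_1<\cdots<t_r<n$ be divisors of $n$ such that $t_i$ divides $t_{i+1}$ for $1\le i\le r-1$. Let $\mathcal{F}=(\mathcal{F}_1,\ldots,\mathcal{F}_r)=(\mathbb{F}_{q^{t_1}},\ldots,\mathbb{F}_{q^{t_r}})$ be the Galois flag of this type on $\mathbb{F}_{q^n}$ and let $\beta\in\mathbb{F}_{q^n}^*$. For $1\le i\le r$ write $\mathrm{Stab}_\beta(\mathcal{F}_i)=\{\gamma\in\langle\beta\rangle:\mathcal{F}_i\gamma=\mathcal{F}_i\}=\langle\beta\rangle\cap\mathbb{F}_{q^{t_i}}^*$. Then $d_f(\mathrm{Orb}_\beta(\mathcal{F}))\in\{0,2t_1,2(t_1+t_2),\ldots,2(t_1+\cdots+t_r)\}$. Moreover: (1) $d_f(\mathrm{Orb}_\beta(\mathcal{F}))=0$ if and only if $\mathrm{Stab}_\beta(\mathcal{F}_1)=\mathrm{Stab}_\beta(\mathcal{F}_r)=\langle\beta\rangle$; (2) $d_f(\mathrm{Orb}_\beta(\mathcal{F}))=2\sum_{i=1}^r t_i$ if and only if $\mathrm{Stab}_\beta(\mathcal{F}_1)=\mathrm{Stab}_\beta(\mathcal{F}_r)\neq\langle\beta\rangle$; (3) $d_f(\mathrm{Orb}_\beta(\mathcal{F}))=2\sum_{i=1}^{j-1}t_i$ if and only if $\mathrm{Stab}_\beta(\mathcal{F}_1)\neq\mathrm{Stab}_\beta(\mathcal{F}_r)$ and $j\in\{2,\ldots,r\}$ is the minimum index such that $\mathrm{S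tab}_\beta(\mathcal{F}_1)\subsetneq\mathrm{Stab}_\beta(\mathcal{F}_j)$.
   Context: $\mathbb{F}_{q^n}$ is regarded as an $\mathbb{F}_q$-vector space. For $\gamma\in\mathbb{F}_{q^n}^*$, $\mathcal{U}\gamma=\{u\gamma:u\in\mathcal{U}\}$ and $\mathcal{F}\gamma=(\mathcal{F}_1\gamma,\ldots,\mathcal{F}_r\gamma)$. For $\beta$ of multiplicative order $|\beta|$, $\mathrm{Orb}_\beta(\mathcal{F})=\{\mathcal{F}\beta^j:0\le j\le|\beta|-1\}$. Subspace distance: $d_S(\mathcal{U},\mathcal{V})=\dim(\mathcal{U}+\mathcal{V})-\dim(\mathcal{U}\cap\mathcal{V})$; flag distance $d_f(\mathcal{F},\mathcal{F}')=\sum_{i=1}^r d_S(\mathcal{F}_i,\mathcal{F}'_i)$. The minimum distance $d_f(\mathcal{C})$ of a set of flags is the minimum flag distance between distinct elements, and $0$ if $|\mathcal{C}|=1$. *)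

(* Defs.v *)
From HB Require Import structures.
From mathcomp Require Import all_boot all_order all_algebra all_fingroup all_field.
Set Implicit Arguments. Unset Strict Implicit. Unset Printing Implicit Defensive.
Import GRing.Theory.
Local Open Scope ring_scope.

Section GaloisFlags.
Variables (F : finFieldType) (L : fieldExtType F).

(* q = #|F|, n = \dim {:L}; L is F_{q^n} viewed as an F_q-vector space. *)
Definition qq : nat := #|F|.
Definition nn : nat := \dim {:L}.

(* F_{q^t} inside L : the set of x with x^(q^t) = x, as an F-subspace
   (x |-> x^(q^t) is F-linear, so linfun coincides with it). *)
Definition GF (t : nat) : {vspace L} :=
  fixedSpace (linfun (fun x : L => x ^+ (qq ^ t))).

Definition vmul (U : {vspace L}) (g : L) : {vspace L} := (amulr g @: U)%VS.

Definition dS (U V : {vspace L}) : nat := (\dim (U + V) - \dim (U :&: V))%N.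

Definition flag (r : nat) := {ffun 'I_r -> {vspace L}}.

Definition flag_mul r (Fl : flag r) (g : L) : flag r :=
  [ffun i => vmul (Fl i) g].

Definition dflag r (A B : flag r) : nat := (\sum_(i < r) dS (A i) (B i))%N.

(* minimum distance of a (finite) set of flags given as a list;
   0 if it has a single element *)
Definition min_dist r (C : seq (flag r)) : nat :=
  let ds := [seq dflag p.1 p.2 | p <- [seq (x, y) | x <- C, y <- C]
                                  & p.1 != p.2] in
  if ds is d :: ds' then foldr minn d ds' else 0%N.

(* multiplicative order of beta (beta <> 0): least k >= 1 with beta^k = 1;
   it is at most q^n - 1 < q^n = #|L| *)
Definition morder (b : L) : nat :=
  (find (fun k => b ^+ k.+1 == 1) (iota 0 (qq ^ nn))).+1.

Definition orb r (Fl : flag r) (b : L) : seq (flag r) :=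
  [seq flag_mul Fl (b ^+ j) | j <- iota 0 (morder b)].

Definition cyc (b : L) (g : L) : Prop := exists j : nat, g = b ^+ j.

Definition stab (b : L) (U : {vspace L}) (g : L) : Prop :=
  cyc b g /\ vmul U g = U.

(* the Galois flag (F_{q^{t_0}}, ..., F_{q^{t_{r-1}}}), 0-based indices *)
Definition galois_flag (r : nat) (t : nat -> nat) : flag r :=
  [ffun i : 'I_r => GF (t i)].

End GaloisFlags.

Definition pset_eq {T} (A B : T -> Prop) : Prop := forall x, A x <-> B x.
Definition pset_sub {T} (A B : T -> Prop) : Prop := forall x, A x -> B x.
Definition pset_ssub {T} (A B : T -> Prop) : Prop := pset_sub A B /\ ~ pset_eq A B.

(* Main.v *)
Require Import Defs.
From HB Require Import structures.
From mathcomp Require Import all_boot all_order all_algebra all_fingroup all_solvable all_field.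
Set Implicit Arguments. Unset Strict Implicit. Unset Printing Implicit Defensive.
Import GRing.Theory.
Local Open Scope ring_scope.

Section Aux.
Variable F : finFieldType.

Lemma expF_qt (a : F) t : a ^+ (#|F| ^ t) = a.
Proof. elim: t => [|t IH]; first by rewrite expr1. by rewrite expnSr exprM IH expf_card. Qed.

Variable L : fieldExtType F.

Lemma frob_add t : zmod_morphism (fun x : L => x ^+ (#|F| ^ t)).
Proof.
move=> x y.
have [p _ pcharFp] := finPcharP F.
have pcharL : p \in [pchar L] by rewrite (pchar_lalg L).
rewrite (card_pprimeChar pcharFp) -expnM.
elim: (_ * t)%N => [|n IHn]; first by rewrite !expr1.
by rewrite expnSr !exprM IHn -!(pFrobenius_autE pcharL) rmorphB.
Qed.

Lemma frob_scale t : scalable (fun x : L => x ^+ (#|F| ^ t)).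
Proof.
by move=> a x /=; rewrite exprZn expF_qt.
Qed.

Lemma memGF t (x : L) : (x \in GF L t) = (x ^+ (qq F ^ t) == x).
Proof.
pose faM := GRing.isZmodMorphism.Build _ _ _ (frob_add t).
pose flM := GRing.isScalable.Build _ _ _ _ _ (frob_scale t).
pose fL : {linear L -> L} := HB.pack (fun x : L => x ^+ (#|F| ^ t)) faM flM.
rewrite /GF /qq.
have -> : (fun x : L => x ^+ (#|F| ^ t)) = fL by [].
by apply/fixedSpaceP/eqP; rewrite lfunE.
Qed.
End Aux.

Section Dim.
Variable F : finFieldType.

Lemma dimGF_split (L : splittingFieldType F) t :
  (0 < t)%N -> (t %| \dim {:L})%N -> \dim (GF L t) = t.
Proof.
move=> t0 tn.
have [alpha gen Dal] := finField_galois_generator (sub1v {:L}%AS).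
have galL := finField_galois (sub1v {:L}%AS).
have [n nE] : {n | \dim {:L} = n} by exists (\dim {:L}).
rewrite nE in tn.
have n0 : (0 < n)%N by rewrite -nE adim_gt0.
have cardG : #|('Gal({:L} / 1))%g| = n by rewrite -galois_dim // dimv1 divn1 nE.
have ordA : #[alpha]%g = n by rewrite orderE -(eqP gen) cardG.
have ordAt : #[(alpha ^+ t)%g]%g = (n %/ t)%N by rewrite orderXdiv ordA.
have alphaX : forall k (x : L), (alpha ^+ k)%g x = x ^+ (qq F ^ k).
  elim=> [|k IH] x; first by rewrite expg0 gal_id expr1.
  by rewrite expgSr galM ?memvf // IH Dal ?memvf // dimv1 expn1 expnSr exprM.
have dvd : (\dim (fixedField (<[alpha ^+ t]>)%g) %| n)%N.
  by rewrite -nE; apply: field_dimS; apply: subvf.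
have eqF : fixedField (<[alpha ^+ t]>)%g = GF L t.
  apply/vspaceP => x; rewrite memGF.
  apply/(fixedFieldP (memvf x))/eqP.
    by move=> H; rewrite -[in RHS](H _ (cycle_id _)) alphaX.
  move=> hx y /cycleP [k ->]; elim: k => [|k IH]; first by rewrite expg0 gal_id.
  by rewrite expgSr galM ?memvf // IH alphaX hx.
have := dim_fixedField (<[alpha ^+ t]>)%G.
rewrite /= -orderE ordAt eqF nE.
move: dvd; rewrite eqF.
move: (\dim (GF L t)) => d dvd E.
have : (t * (n %/ t) = d * (n %/ d))%N by rewrite ![(_ * (n %/ _))%N]mulnC !divnK.
have q0 : (0 < n %/ t)%N by rewrite divn_gt0 // dvdn_leq.
rewrite -E => /eqP; by rewrite eqn_pmul2r // => /eqP ->.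
Qed.
End Dim.

Lemma dimGF (F : finFieldType) (L : fieldExtType F) t :
  (0 < t)%N -> (t %| nn L)%N -> \dim (GF L t) = t.
Proof.
move: t; wlog [{}L -> t]: L / exists galL : splittingFieldType F, L = galL.
  by pose galL := FinSplittingFieldType F L => /(_ galL); apply; exists galL.
exact: dimGF_split.
Qed.
Section VM.
Variables (F : finFieldType) (L : fieldExtType F).
Implicit Types (U : {vspace L}) (a b g : L).

Lemma vmulP U g y : reflect (exists2 u, u \in U & y = u * g) (y \in vmul U g).
Proof.
apply: (iffP memv_imgP) => [] [u Uu ->]; exists u; rewrite ?lfunE //.
Qed.

Lemma dim_vmul U g : g != 0 -> \dim (vmul U g) = \dim U.
Proof.
move=> g0; rewrite /vmul limg_dim_eq //.
by rewrite (eqP (lker0_amulr _)) ?capv0 // unitfE.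
Qed.

Variable U : {vspace L}.
Hypothesis U1 : 1 \in U.
Hypothesis UM : forall x y, x \in U -> y \in U -> x * y \in U.
Hypothesis UV : forall x, x \in U -> x^-1 \in U.

Lemma vmul_eq a b : a != 0 -> b != 0 -> b / a \in U -> vmul U a = vmul U b.
Proof.
move=> a0 b0 ba; apply/vspaceP => y; apply/vmulP/vmulP => [[u Uu ->]|[u Uu ->]].
  exists (u * (b / a)^-1); first by rewrite UM ?UV.
  by rewrite invf_div -!mulrA mulVf // mulr1.
exists (u * (b / a)); first by rewrite UM.
by rewrite -!mulrA mulVf // mulr1.
Qed.

Lemma vmul_eqE a b : a != 0 -> b != 0 -> (vmul U a == vmul U b) = (b / a \in U).
Proof.
move=> a0 b0; apply/eqP/idP => [E|]; last exact: vmul_eq.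
have : b \in vmul U b by apply/vmulP; exists 1; rewrite ?mul1r.
rewrite -E => /vmulP [u Uu ->]; by rewrite mulfK.
Qed.

Lemma dS_vmul a b : a != 0 -> b != 0 ->
  dS (vmul U a) (vmul U b) = if b / a \in U then 0%N else (2 * \dim U)%N.
Proof.
move=> a0 b0; case: ifP => ba.
  by rewrite /dS (vmul_eq a0 b0 ba) addvv capvv subnn.
have cap0 : (vmul U a :&: vmul U b = 0)%VS.
  apply/eqP; rewrite -subv0; apply/subvP => y /memv_capP [/vmulP [u Uu ->] /vmulP [v Uv E]].
  rewrite memv0; have [v0|v0] := eqVneq v 0; first by rewrite E v0 mul0r.
  suff : b / a \in U by rewrite ba.
  have -> : b / a = u / v.
    by apply: (mulIf a0); rewrite divfK // mulrAC E mulrC mulrA mulVf // mul1r.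
  by rewrite UM ?UV.
have := dimv_sum_cap (vmul U a) (vmul U b).
rewrite cap0 dimv0 addn0 !dim_vmul // => E.
by rewrite /dS E cap0 dimv0 subn0 addnn mul2n.
Qed.
End VM.

Section GFprops.
Variables (F : finFieldType) (L : fieldExtType F).

Lemma GF1 t : 1 \in GF L t.
Proof. by rewrite memGF expr1n. Qed.

Lemma GFM t x y : x \in GF L t -> y \in GF L t -> x * y \in GF L t.
Proof. by rewrite !memGF exprMn => /eqP-> /eqP->. Qed.

Lemma GFV t x : x \in GF L t -> x^-1 \in GF L t.
Proof. by rewrite !memGF exprVn => /eqP->. Qed.

Lemma GF_sub s t x : (s %| t)%N -> x \in GF L s -> x \in GF L t.
Proof.
move=> /dvdnP [k ->]; rewrite !memGF mulnC expnM => /eqP hx.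
apply/eqP; elim: k => [|k IH]; first by rewrite expn0 expr1.
by rewrite expnSr exprM IH hx.
Qed.

Lemma GF_full : (0 < nn L)%N -> GF L (nn L) = fullv.
Proof.
move=> n0; apply/eqP; by rewrite eqEdim subvf dimGF ?dvdnn //= /nn leqnn.
Qed.

Lemma vmul1 U : vmul U (1 : L) = U.
Proof.
apply/vspaceP => y; apply/vmulP/idP => [[u Uu ->]|Uy]; first by rewrite mulr1.
by exists y; rewrite ?mulr1.
Qed.

End GFprops.

Section Main.
Variables (F : finFieldType) (L : fieldExtType F) (r : nat) (t : nat -> nat) (beta : L).
Hypothesis hr : (0 < r)%N.
Hypothesis ht0 : (0 < t 0%N)%N.
Hypothesis htn : forall i, (i < r)%N -> (t i < nn L)%N /\ (t i %| nn L)%N.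
Hypothesis htt : forall i, (i.+1 < r)%N -> (t i < t i.+1)%N /\ (t i %| t i.+1)%N.
Hypothesis hb : beta != 0.

Local Notation K i := (GF L (t i)).
Local Notation m := (morder beta).

Lemma t_pos i : (i < r)%N -> (0 < t i)%N.
Proof.
elim: i => [//|i IH] ir.
have [lt _] := htt ir; exact: leq_trans (IH (ltnW ir)) (ltnW lt).
Qed.

Lemma t_dvd i j : (i <= j)%N -> (j < r)%N -> (t i %| t j)%N.
Proof.
move=> /subnKC <-; elim: (j - i)%N => [|k IH]; first by rewrite addn0.
move=> ir; rewrite addnS in ir *; apply: dvdn_trans (IH (ltnW ir)) _.
by have [] := htt ir.
Qed.

Lemma K_sub i j x : (i <= j)%N -> (j < r)%N -> x \in K i -> x \in K j.
Proof. by move=> ij jr; apply: GF_sub; apply: t_dvd. Qed.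

Lemma dimK i : (i < r)%N -> \dim (K i) = t i.
Proof. by move=> ir; rewrite dimGF ?t_pos //; have [] := htn ir. Qed.

Lemma n_pos : (0 < nn L)%N.
Proof. by have [lt _] := htn hr; apply: leq_ltn_trans lt. Qed.

Lemma mord1 : beta ^+ m = 1.
Proof.
set Q := (qq F ^ nn L)%N.
have bQ : beta ^+ Q = beta.
  by apply/eqP; rewrite -memGF GF_full ?memvf ?n_pos.
have q1 : (1 < qq F)%N by rewrite /qq finRing_gt1.
have Q2 : (1 < Q)%N by rewrite /Q -(expn0 (qq F)) ltn_exp2l ?n_pos.
have hasP : has (fun k => beta ^+ k.+1 == 1) (iota 0 Q).
  apply/hasP; exists Q.-2; first by rewrite mem_iota /= add0n; case: (Q) Q2 => [|[|q]].
  apply/eqP; apply: (mulIf hb); rewrite mul1r -exprSr.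
  by have -> : Q.-2.+2 = Q by case: (Q) Q2 => [|[|]].
have := nth_find 0%N hasP; rewrite nth_iota ?add0n.
  by move/eqP.
by move: hasP; rewrite has_find size_iota.
Qed.

Lemma m_pos : (0 < m)%N.
Proof. by []. Qed.

Lemma cycP g : cyc beta g <-> exists2 e, (e < m)%N & g = beta ^+ e.
Proof.
split=> [[j ->]|[e _ ->]]; last by exists e.
exists (j %% m)%N; first by rewrite ltn_mod.
by rewrite {1}(divn_eq j m) exprD mulnC exprM mord1 expr1n mul1r.
Qed.

Lemma cyc_nz g : cyc beta g -> g != 0.
Proof. by case=> j ->; rewrite expf_neq0. Qed.

Lemma betaV : beta^-1 = beta ^+ m.-1.
Proof.
apply: (mulIf hb); rewrite mulVf // -exprSr prednK //; exact: (esym mord1).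
Qed.

Lemma cyc_div e1 e2 : cyc beta (beta ^+ e2 / beta ^+ e1).
Proof.
by exists (e2 + m.-1 * e1)%N; rewrite -exprVn betaV -exprM exprD.
Qed.

Lemma StP i g : (i < r)%N ->
  (stab beta (K i) g <-> cyc beta g /\ g \in K i).
Proof.
move=> ir; split=> [[cg E]|[cg Kg]].
  split=> //; have := vmul_eqE (@GF1 _ L (t i)) (@GFM _ L (t i)) (@GFV _ L (t i)) (oner_neq0 L) (cyc_nz cg).
  by rewrite vmul1 E eqxx divr1 => /esym.
split=> //; apply/esym/eqP.
rewrite -{1}(vmul1 (K i)) vmul_eqE ?divr1 ?oner_neq0 ?cyc_nz //.
  exact: GF1. exact: GFM. exact: GFV.
Qed.


Definition Eb k := [exists e : 'I_m, (beta ^+ e \in K k) && (beta ^+ e \notin K 0%N)].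
Definition C0 := [exists e : 'I_m, beta ^+ e \notin K 0%N].
Definition jj := find Eb (iota 0 r).

Lemma EbP k : reflect (exists g, [/\ cyc beta g, g \in K k & g \notin K 0%N]) (Eb k).
Proof.
apply: (iffP existsP) => [[e /andP [h1 h2]]|[g [/cycP [e em ->] h1 h2]]].
  by exists (beta ^+ e); split=> //; exists e.
by exists (Ordinal em); rewrite h1 h2.
Qed.

Lemma C0P : reflect (exists g, cyc beta g /\ g \notin K 0%N) C0.
Proof.
apply: (iffP existsP) => [[e h]|[g [/cycP [e em ->] h]]].
  by exists (beta ^+ e); split=> //; exists e.
by exists (Ordinal em).
Qed.

Lemma Eb0 : ~~ Eb 0.
Proof. by apply/EbP => [[g [_ -> ]]]. Qed.

Lemma EbC k : Eb k -> C0.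
Proof. by move/EbP => [g [cg _ h]]; apply/C0P; exists g. Qed.

Lemma Eb_mono k k' : (k <= k')%N -> (k' < r)%N -> Eb k -> Eb k'.
Proof.
move=> kk kr /EbP [g [cg gk g0]]; apply/EbP; exists g; split=> //.
exact: K_sub gk.
Qed.

Lemma jj_le : (jj <= r)%N.
Proof. by have := find_size Eb (iota 0 r); rewrite size_iota. Qed.

Lemma jj_E : (jj < r)%N -> Eb jj.
Proof.
move=> jr; have hasE : has Eb (iota 0 r) by rewrite has_find size_iota.
by have := nth_find 0%N hasE; rewrite nth_iota.
Qed.

Lemma jj_before k : (k < jj)%N -> ~~ Eb k.
Proof.
move=> kj; have := before_find 0%N kj; rewrite nth_iota ?add0n => [->//|].
exact: leq_trans kj jj_le.
Qed.

Lemma jj_pos : (0 < jj)%N.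
Proof.
rewrite lt0n; apply/eqP => j0.
by have := jj_E; rewrite j0 hr => /(_ isT); rewrite (negbTE Eb0).
Qed.

Lemma jj_r : (jj == r) = ~~ Eb r.-1.
Proof.
apply/eqP/idP => [E|nE].
  by apply: jj_before; rewrite E prednK.
apply/eqP; rewrite eqn_leq jj_le /=; rewrite leqNgt; apply/negP => jr.
by move/negP: nE; apply; apply: Eb_mono (jj_E jr); rewrite ?prednK // -ltnS prednK.
Qed.

Lemma jj_eq j : (j < r)%N -> (jj = j) <-> Eb j /\ (forall k, (k < j)%N -> ~~ Eb k).
Proof.
move=> jr; split=> [E|[Ej bef]].
  by rewrite -E in jr *; split; [exact: jj_E jr | exact: jj_before].
apply/eqP; rewrite eqn_leq; apply/andP; split.
  by rewrite leqNgt; apply/negP => /jj_before; rewrite Ej.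
by rewrite leqNgt; apply/negP => /[dup] lt /bef; rewrite jj_E // (ltn_trans lt jr).
Qed.

Local Notation St i := (stab beta (GF L (t i))).

Lemma St_eq k : (k < r)%N -> pset_eq (St 0%N) (St k) <-> ~~ Eb k.
Proof.
move=> kr; split=> [E|nE x].
  apply/negP => /EbP [g [cg gk g0]].
  have : St k g by apply/StP.
  by move/E/(StP _ hr) => [_ ]; rewrite (negbTE g0).
split=> [/(StP _ hr) [cx x0]|/(StP _ kr) [cx xk]].
  by apply/(StP _ kr); split=> //; apply: K_sub x0.
apply/(StP _ hr); split=> //; case: (boolP (x \in K 0%N)) => // x0.
by move/negP: nE; case; apply/EbP; exists x.
Qed.

Lemma St_ssub k : (k < r)%N -> pset_ssub (St 0%N) (St k) <-> Eb k.
Proof.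
move=> kr; rewrite /pset_ssub; split=> [[_ neq]|Ek].
  by case: (boolP (Eb k)) => // nE; case: neq; exact: (proj2 (St_eq kr) nE).
split; last by move/(St_eq kr); rewrite Ek.
move=> x /(StP _ hr) [cx x0]; apply/(StP _ kr); split=> //; exact: K_sub x0.
Qed.

Lemma St_cyc : pset_eq (St 0%N) (cyc beta) <-> ~~ C0.
Proof.
split=> [E|nC x].
  apply/negP => /C0P [g [cg g0]].
  by move: cg => /E/(StP _ hr) [_]; rewrite (negbTE g0).
split=> [/(StP _ hr) []//|cx]; apply/(StP _ hr); split=> //.
case: (boolP (x \in K 0%N)) => // x0.
by move/negP: nC; case; apply/C0P; exists x.
Qed.

Local Notation Fl := (galois_flag L r t).

Lemma flag_eqE a b : a != 0 -> b != 0 ->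
  (flag_mul Fl a == flag_mul Fl b) = (b / a \in K 0%N).
Proof.
move=> a0 b0; apply/eqP/idP => [E|h].
  have := congr1 (fun f : flag L r => f (Ordinal hr)) E; rewrite !ffunE => /eqP.
  by rewrite vmul_eqE //; [exact: GF1 | exact: GFM | exact: GFV].
apply/ffunP => i; rewrite !ffunE; apply/eqP; rewrite vmul_eqE //;
  [exact: (K_sub (leq0n i) (ltn_ord i) h) | exact: GF1 | exact: GFM | exact: GFV].
Qed.

Lemma dflagE a b : a != 0 -> b != 0 ->
  dflag (flag_mul Fl a) (flag_mul Fl b) =
  (\sum_(i < r) (if b / a \in K i then 0 else 2 * t i))%N.
Proof.
move=> a0 b0; rewrite /dflag; apply: eq_bigr => i _.
rewrite !ffunE dS_vmul ?dimK ?GF1 //; [exact: GFM | exact: GFV].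
Qed.

Lemma foldmin (d : nat) s :
  foldr minn d s \in d :: s /\ forall x, x \in d :: s -> (foldr minn d s <= x)%N.
Proof.
elim: s => [|x0 s [IHin IHle]] /=.
  by split; [rewrite mem_seq1 | move=> x; rewrite mem_seq1 => /eqP->].
split.
  case: (leqP x0 (foldr minn d s)) => h.
    by rewrite !inE eqxx orbT.
   move: IHin; rewrite !inE => /orP [->//|->].
  by rewrite !orbT.
move=> x; rewrite !inE => /or3P [/eqP->|/eqP->|xs].
- by rewrite geq_min IHle ?orbT ?inE ?eqxx.
- by rewrite geq_min leqnn.
- by rewrite geq_min IHle ?orbT // inE xs orbT.
Qed.

Lemma min_distE (C : seq (flag L r)) v :
  (forall x y, x \in C -> y \in C -> x != y -> (v <= dflag x y)%N) ->
  (exists x y, [/\ x \in C, y \in C, x != y & dflag x y = v]) ->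
  min_dist C = v.
Proof.
move=> lb [x [y [xC yC xy dv]]]; rewrite /min_dist.
set ds := [seq _ | p <- _ & _].
have inds : forall z, z \in ds -> (v <= z)%N.
  move=> z /mapP [p]; rewrite mem_filter => /andP [p12 /allpairsP [[x' y'] [/= hx hy E]]] ->.
  by rewrite E in p12 *; apply: lb.
have vin : v \in ds.
  rewrite -dv; apply/mapP; exists (x, y) => //.
  by rewrite mem_filter /= xy; apply: (allpairs_f pair xC yC).
move: inds vin; case: ds => [//|d ds'] inds vin.
have [fin fle] := foldmin d ds'.
by apply/eqP; rewrite eqn_leq fle // inds.
Qed.

Lemma min_dist0 (C : seq (flag L r)) :
  (forall x y, x \in C -> y \in C -> x = y) -> min_dist C = 0%N.
Proof.
move=> all_eq; rewrite /min_dist.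
set ds := [seq _ | p <- _ & _].
suff -> : ds = [::] by [].
apply/eqP; rewrite -size_eq0 size_map size_filter eqn0Ngt -has_count.
apply/hasPn => p /allpairsP [[x' y'] [/= hx hy E]].
by rewrite E /= (all_eq _ _ hx hy) eqxx.
Qed.

Lemma sum_split j : (j <= r)%N ->
  (\sum_(i < r) (if (i < j)%N then 2 * t i else 0) = 2 * \sum_(i < j) t i)%N.
Proof.
move=> jr; rewrite (big_ord_widen r (fun i => t i) jr) big_mkcond big_distrr /=.
by rewrite [RHS]big_mkcond.
Qed.

Lemma notin_before g k : cyc beta g -> g \notin K 0%N -> (k < jj)%N -> g \notin K k.
Proof.
move=> cg g0 kj; apply/negP => gk; move/negP: (jj_before kj); apply.
by apply/EbP; exists g.
Qed.

Lemma D_lower g : cyc beta g -> g \notin K 0%N ->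
  (2 * \sum_(i < jj) t i <= \sum_(i < r) (if g \in K i then 0 else 2 * t i))%N.
Proof.
move=> cg g0; rewrite -sum_split ?jj_le //; apply: leq_sum => i _.
case: ifP => // ij; by rewrite (negbTE (notin_before cg g0 ij)).
Qed.

Lemma D_wit : C0 -> exists e, [/\ (e < m)%N, beta ^+ e \notin K 0%N &
  \sum_(i < r) (if beta ^+ e \in K i then 0 else 2 * t i) = 2 * \sum_(i < jj) t i]%N.
Proof.
move=> hC; rewrite -sum_split ?jj_le //.
have [jr|rj] := ltnP jj r.
  have /EbP [g [cg gj g0]] := jj_E jr.
  have [e em ge] := (proj1 (cycP g)) cg; exists e; rewrite -ge; split=> //.
  apply: eq_bigr => i _; case: (ltnP i jj) => ij.
    by rewrite (negbTE (notin_before cg g0 ij)).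
  by rewrite (K_sub ij (ltn_ord i) gj).
have /C0P [g [cg g0]] := hC.
have [e em ge] := (proj1 (cycP g)) cg; exists e; rewrite -ge; split=> //.
apply: eq_bigr => i _; have ij : (i < jj)%N by apply: leq_trans (ltn_ord i) rj.
by rewrite ij (negbTE (notin_before cg g0 ij)).
Qed.

Lemma d_val : min_dist (orb Fl beta) = if C0 then (2 * \sum_(i < jj) t i)%N else 0%N.
Proof.
have nz : forall e, beta ^+ e != 0 by move=> e; rewrite expf_neq0.
case: ifP => hC.
  apply: min_distE.
    move=> x y /mapP [e1 _ ->] /mapP [e2 _ ->].
    rewrite flag_eqE // dflagE // => h.
    exact: D_lower (cyc_div _ _) h.
  have [e [em e0 De]] := D_wit hC.
  exists (flag_mul Fl (beta ^+ 0)), (flag_mul Fl (beta ^+ e)).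
  split.
  - by apply: (map_f (fun j => flag_mul Fl (beta ^+ j))); rewrite mem_iota.
  - by apply: (map_f (fun j => flag_mul Fl (beta ^+ j))); rewrite mem_iota.
  - by rewrite flag_eqE // expr0 divr1.
  - by rewrite dflagE // expr0 divr1.
apply: min_dist0 => x y /mapP [e1 _ ->] /mapP [e2 _ ->].
apply/eqP; rewrite flag_eqE //.
case: (boolP (_ \in _)) => // h.
by move/negbT: hC => /negP; case; apply/C0P; exists (beta ^+ e2 / beta ^+ e1); split=> //; apply: cyc_div.
Qed.

Lemma T_lt k k' : (k < k')%N -> (k' <= r)%N -> (\sum_(i < k) t i < \sum_(i < k') t i)%N.
Proof.
move=> kk'; elim: k' kk' => [//|k' IH] kk' k'r.
rewrite big_ord_recr /=.
have tp : (0 < t k')%N by apply: t_pos.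
move: kk'; rewrite ltnS leq_eqVlt => /orP [/eqP->|lt].
  by rewrite -[X in (X < _)%N]addn0 ltn_add2l.
apply: (leq_trans (IH lt (ltnW k'r))); exact: leq_addr.
Qed.

Lemma T_inj k k' : (k <= r)%N -> (k' <= r)%N ->
  (2 * \sum_(i < k) t i = 2 * \sum_(i < k') t i)%N -> k = k'.
Proof.
move=> kr k'r /eqP; rewrite eqn_pmul2l // => /eqP E.
case: (ltngtP k k') => // h.
  by have := T_lt h k'r; rewrite E ltnn.
by have := T_lt h kr; rewrite E ltnn.
Qed.

Lemma T_pos k : (0 < k)%N -> (k <= r)%N -> (2 * \sum_(i < k) t i <> 0)%N.
Proof.
move=> k0 kr; have := T_lt k0 kr; rewrite big_ord0 => h /eqP.
by rewrite muln_eq0 /= => /eqP E; rewrite E in h.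
Qed.

Lemma main_res :
  let d := min_dist (orb Fl beta) in
  let St := fun i : nat => stab beta (GF L (t i)) in
  ((exists k, (k <= r)%N /\ d = (2 * \sum_(i < k) t i)%N)) /\
  (d = 0%N <-> pset_eq (St 0%N) (St r.-1) /\ pset_eq (St 0%N) (cyc beta)) /\
  (d = (2 * \sum_(i < r) t i)%N <->
     pset_eq (St 0%N) (St r.-1) /\ ~ pset_eq (St 0%N) (cyc beta)) /\
  (forall j, (1 <= j < r)%N ->
     (d = (2 * \sum_(i < j) t i)%N <->
        ~ pset_eq (St 0%N) (St r.-1) /\ pset_ssub (St 0%N) (St j) /\
        (forall k, (1 <= k < j)%N -> ~ pset_ssub (St 0%N) (St k)))).
Proof.
move=> d S; rewrite /d d_val /S {d S}.
have r1 : (r.-1 < r)%N by rewrite ltn_predL.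
have nEC : ~~ C0 -> ~~ Eb r.-1 by apply: contra; apply: EbC.
split; [|split; [|split]].
- case: ifP => _; first by exists jj; rewrite jj_le.
  by exists 0%N; rewrite big_ord0.
- case: (boolP C0) => hC; split.
  + by move/(T_pos jj_pos jj_le).
  + by move=> [_ /St_cyc]; rewrite hC.
  + by move=> _; split; [apply/(St_eq r1); exact: nEC | exact/St_cyc].
  + by [].
- case: (boolP C0) => hC; split.
  + move/(T_inj jj_le (leqnn r))/eqP; rewrite jj_r => h.
    by split; [exact/(St_eq r1) | move/St_cyc; rewrite hC].
  + move=> [/(St_eq r1) h _]; congr (2 * _)%N.
    by have /eqP -> : jj == r by rewrite jj_r.
  + by move/esym/(T_pos hr (leqnn r)).
  + by move=> [_ []]; apply/St_cyc.
- move=> j /andP [j1 jr].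
  case: (boolP C0) => hC; split.
  + move/(T_inj jj_le (ltnW jr))/(jj_eq jr) => [Ej bef].
    split; first by move/(St_eq r1); apply/negP/negPn; apply: Eb_mono Ej; rewrite // -ltnS prednK.
    split; first exact/(St_ssub jr).
    by move=> k /andP [_ kj] /(St_ssub (ltn_trans kj jr)); apply/negP; apply: bef.
  + move=> [_ [/(St_ssub jr) Ej hk]].
    suff -> : jj = j by [].
    apply/(jj_eq jr); split=> // k kj.
    case: k kj => [_|k kj]; first exact: Eb0.
    case: (boolP (Eb k.+1)) => // Ek; case: (hk k.+1) => //.
    exact/(St_ssub (ltn_trans kj jr)).
  + by move/esym/(T_pos j1 (ltnW jr)).
  + by move=> [_ [/(St_ssub jr) /EbC]]; rewrite (negbTE hC).
Qed.

End Main.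

Unset Implicit Arguments.
Set Strict Implicit.
Set Printing Implicit Defensive.

Theorem theorem4p14 (F : finFieldType) (L : fieldExtType F)
    (r : nat) (t : nat -> nat) (beta : L) :
  (0 < r)%N ->
  (0 < t 0%N)%N ->
  (forall i, (i < r)%N -> (t i < nn L)%N /\ (t i %| nn L)%N) ->
  (forall i, (i.+1 < r)%N -> (t i < t i.+1)%N /\ (t i %| t i.+1)%N) ->
  beta != 0 ->
  let Fl := galois_flag L r t in
  let d := min_dist (orb Fl beta) in
  let St := fun i : nat => stab beta (GF L (t i)) in
  ((exists k, (k <= r)%N /\ d = (2 * \sum_(i < k) t i)%N)) /\
  (d = 0%N <-> pset_eq (St 0%N) (St r.-1) /\ pset_eq (St 0%N) (cyc beta)) /\
  (d = (2 * \sum_(i < r) t i)%N <->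
     pset_eq (St 0%N) (St r.-1) /\ ~ pset_eq (St 0%N) (cyc beta)) /\
  (forall j, (1 <= j < r)%N ->
     (d = (2 * \sum_(i < j) t i)%N <->
        ~ pset_eq (St 0%N) (St r.-1) /\ pset_ssub (St 0%N) (St j) /\
        (forall k, (1 <= k < j)%N -> ~ pset_ssub (St 0%N) (St k)))).
Proof.
move=> hr ht0 htn htt hb; exact: (main_res hr ht0 htn htt hb).
Qed.
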